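(* If $u=v_1\,0\,v_2\,0\cdots0\,v_r$, where $v_1,\dots,v_r$ are arbitrary (possibly empty) words over $\{1,0,\bar1\}$, then \[ [u]=[v_10]\,[0v_20]\cdots[0v_{r-1}0]\,[0v_r]. \]
   Context: Words are finite sequences over the alphabet $\{1,0,\bar1\}$ (where $\bar1=-1$). Let $a,b,c,d,e$ be indeterminates. For every word $u$ a Laurent polynomial $[u]$ in $a,b,c,d,e$ is defined by the recursions, valid for all (possibly empty) words $v,w$: $[v01w]=[v0w]/a$, $[v\bar11w]=([v\bar1w]+[v1w])/b$, $[v\bar10w]=[v0w]/c$, $[v\bar1]=[v]/d$, $[1v]=[v]/e$, together with $[u]=1$ whenever $u$ consists only of $0$'s (including the empty word). These rules determine $[u]$ uniquely for every word. *)

(* Defs.v *)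
From mathcomp Require Import all_boot all_order all_algebra.
Set Implicit Arguments. Unset Strict Implicit. Unset Printing Implicit Defensive.
Import GRing.Theory.
Local Open Scope ring_scope.

(* Letters of the alphabet {1, 0, -1}; Lm stands for \bar 1 = -1. *)
Inductive letter := L1 | L0 | Lm.

Definition is_bracket (F : fieldType) (a b c d e : F)
    (br : seq letter -> F) : Prop :=
  (forall v w : seq letter,
     br (v ++ L0 :: L1 :: w) = br (v ++ L0 :: w) / a) /\
  (forall v w : seq letter,
     br (v ++ Lm :: L1 :: w) = (br (v ++ Lm :: w) + br (v ++ L1 :: w)) / b) /\
  (forall v w : seq letter,
     br (v ++ Lm :: L0 :: w) = br (v ++ L0 :: w) / c) /\
  (forall v : seq letter, br (v ++ [:: Lm]) = br v / d) /\
  (forall v : seq letter, br (L1 :: v) = br v / e) /\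
  (forall n : nat, br (nseq n L0) = 1).

(* Main.v *)
Require Import Defs.
From mathcomp Require Import all_boot all_order all_algebra.
From mathcomp Require Import zify.
Import GRing.Theory.
Local Open Scope ring_scope.

Lemma classify (x : seq letter) :
  (exists n, x = nseq n L0) \/ (exists y, x = L1 :: y) \/
  (exists y, x = y ++ [:: Lm]) \/
  (exists p q, x = p ++ L0 :: L1 :: q) \/
  (exists p q, x = p ++ Lm :: L1 :: q) \/
  (exists p q, x = p ++ Lm :: L0 :: q).
Proof.
elim: x => [|h t IH]; first by left; exists 0%N.
case: IH => [[n ->]|[[y ->]|[[y ->]|[[p [q ->]]|[[p [q ->]]|[p [q ->]]]]]]].
- case: h.
  + by right; left; exists (nseq n L0).
  + by left; exists n.+1.
  + case: n => [|n].
    * by right; right; left; exists [::].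
    * by do 5 right; exists [::], (nseq n L0).
- case: h.
  + by right; left; exists (L1 :: y).
  + by do 3 right; left; exists [::], y.
  + by do 4 right; left; exists [::], y.
- by right; right; left; exists (h :: y).
- by do 3 right; left; exists (h :: p), q.
- by do 4 right; left; exists (h :: p), q.
- by do 5 right; exists (h :: p), q.
Qed.

Section S.
Variables (F : fieldType) (a b c d e : F) (br : seq letter -> F).
Hypothesis hbr : is_bracket a b c d e br.

Lemma zeros_tail (v : seq letter) (n : nat) :
  br (v ++ L0 :: nseq n L0) = br (v ++ [:: L0]).
Proof.
case: hbr => [h01 [hm1 [hm0 [hmE [h1 hz]]]]].
move: {2}(size v) (leqnn (size v)) => k.
elim: k v => [|k IH] v.
  by case: v => // _; rewrite /= -[L0 :: nseq n L0]/(nseq n.+1 L0) hz -[[:: L0]]/(nseq 1 L0) hz.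
move=> hv.
case: (classify v) hv => [[m ->]|[[y ->]|[[y ->]|[[p [q ->]]|[[p [q ->]]|[p [q ->]]]]]]] hv.
- have E : forall j, nseq m L0 ++ L0 :: nseq j L0 = nseq (m + j).+1 L0.
    by move=> j; rewrite -[L0 :: nseq j L0]/(nseq j.+1 L0) -nseqD addnS.
  by rewrite E -[[:: L0]]/(L0 :: nseq 0 L0) E !hz.
- rewrite /= !h1 IH //; move: hv; rewrite /=; lia.
- rewrite -!catA /= !hm0 IH //; move: hv; rewrite size_cat /=; lia.
- have E := IH (p ++ L0 :: q); rewrite -!catA /= in E.
  rewrite -!catA /= !h01 E //; move: hv; rewrite !size_cat /=; lia.
- have E1 := IH (p ++ Lm :: q); rewrite -!catA /= in E1.
  have E2 := IH (p ++ L1 :: q); rewrite -!catA /= in E2.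
  rewrite -!catA /= !hm1 E1 ?E2 //; move: hv; rewrite !size_cat /=; lia.
- have E := IH (p ++ L0 :: q); rewrite -!catA /= in E.
  rewrite -!catA /= !hm0 E //; move: hv; rewrite !size_cat /=; lia.
Qed.

Lemma split0 (v w : seq letter) :
  br (v ++ L0 :: w) = br (v ++ [:: L0]) * br (L0 :: w).
Proof.
have hbr' := hbr.
case: hbr' => [h01 [hm1 [hm0 [hmE [h1 hz]]]]].
move: {2}(size w) (leqnn (size w)) => k.
elim: k w => [|k IH] w.
  case: w => // _; by rewrite -[[:: L0]]/(nseq 1 L0) hz mulr1.
move=> hw.
case: (classify w) hw => [[m ->]|[[y ->]|[[y ->]|[[p [q ->]]|[[p [q ->]]|[p [q ->]]]]]]] hw.
- rewrite zeros_tail -[L0 :: nseq m L0]/(nseq m.+1 L0) hz mulr1 //.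
- have A := h01 v y; have B := h01 [::] y; rewrite /= in B.
  rewrite A B IH ?mulrA //; move: hw; rewrite /=; lia.
- have A := hmE (v ++ L0 :: y); have B := hmE (L0 :: y).
  rewrite -!catA /= in A; rewrite /= in B.
  rewrite A B IH ?mulrA //; move: hw; rewrite size_cat /=; lia.
- have A := h01 (v ++ L0 :: p) q; have B := h01 (L0 :: p) q.
  rewrite -!catA /= in A; rewrite /= in B.
  rewrite A B IH ?mulrA //; move: hw; rewrite !size_cat /=; lia.
- have A := hm1 (v ++ L0 :: p) q; have B := hm1 (L0 :: p) q.
  rewrite -!catA /= in A; rewrite /= in B.
  rewrite A B (IH (p ++ Lm :: q)); last by move: hw; rewrite !size_cat /=; lia.
  rewrite (IH (p ++ L1 :: q)); last by move: hw; rewrite !size_cat /=; lia.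
  by rewrite [RHS]mulrA mulrDr.
- have A := hm0 (v ++ L0 :: p) q; have B := hm0 (L0 :: p) q.
  rewrite -!catA /= in A; rewrite /= in B.
  rewrite A B IH ?mulrA //; move: hw; rewrite !size_cat /=; lia.
Qed.

End S.

(* u = v_1 0 v_2 0 ... 0 v_r with r = size mids + 2, mids = [v_2; ...; v_{r-1}] *)
Theorem proposition4 (F : fieldType) (a b c d e : F)
    (ha : a != 0) (hb : b != 0) (hc : c != 0) (hd : d != 0) (he : e != 0)
    (br : seq letter -> F) (hbr : is_bracket a b c d e br)
    (v1 vr : seq letter) (mids : seq (seq letter)) :
  br (v1 ++ L0 :: flatten [seq v ++ [:: L0] | v <- mids] ++ vr) =
  br (v1 ++ [:: L0]) * (\prod_(v <- mids) br (L0 :: v ++ [:: L0])) * br (L0 :: vr).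
Proof.
elim: mids v1 => [|m ms IH] v1.
  by rewrite big_nil mulr1 /= (@split0 _ _ _ _ _ _ _ hbr).
rewrite big_cons /= (@split0 _ _ _ _ _ _ _ hbr) -!catA /=.
have := IH (L0 :: m); rewrite -?catA /= => ->.
by rewrite !mulrA.
Qed.
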